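(* Let $F$ be a field with $\mathrm{char}\,F\ne2$ and let $A$ be an involutive $F$-algebra with involution $a\mapsto\bar a$ and trace $\mathrm{tr}(a)=a+\bar a\in F$. Then: (1) $\overline{ab}-ba=\mathrm{tr}(a)\mathrm{tr}(b)-\mathrm{tr}(a)b-\mathrm{tr}(b)a$ for all $a,b\in A$; (2) $A$ is von-Neumann finite if and only if for all $a,b\in A$ with $ab\in F\setminus\{0\}$ (i.e. $ab$ is a nonzero scalar multiple of $1$), either $a,b\in\mathrm{Im}\,A$ or $1,a,b$ are linearly dependent; (3) $A$ is reversible if and only if for all $a,b\in A$ with $ab=0$, either $a,b\in\mathrm{Im}\,A$ or $1,a,b$ are linearly dependent.
   Context: Algebras are unital with bilinear, not necessarily associative, multiplication; $F$ is identified with $F1$. $A$ is involutive if there is an anti-automorphism $\sigma$ (written $\sigma(a)=\bar a$) with $\sigma^2=\mathrm{id}$ and $a+\bar a\in F1$, $a\bar a\in F1$ for all $a$. $\mathrm{Im}\,A=\{u\in A\setminus F1: u^2\in F1\}\cup\{0\}$. von-Neumann finite: $ab=1\Rightarrow ba=1$; reversible: $ab=0\Rightarrow ba=0$. *)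

(* Defs.v *)
(* A (not necessarily associative) unital F-algebra is
   modelled as an F-module V with a bilinear multiplication mul and unit one. *)
From mathcomp Require Import all_boot all_algebra.
Set Implicit Arguments. Unset Strict Implicit. Unset Printing Implicit Defensive.
Import GRing.Theory.
Local Open Scope ring_scope.

Section NonAssocAlg.
Variables (F : fieldType) (V : lmodType F).

Definition bilinear_mul (mul : V -> V -> V) : Prop :=
  (forall (c : F) x y z, mul (c *: x + y) z = c *: mul x z + mul y z) /\
  (forall (c : F) x y z, mul z (c *: x + y) = c *: mul z x + mul z y).

(* unital, with F identified with F1 (so 1 <> 0) *)
Definition unital (mul : V -> V -> V) (one : V) : Prop :=
  one != 0 /\ (forall x, mul one x = x /\ mul x one = x).

Definition inF1 (one x : V) : Prop := exists c : F, x = c *: one.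

Definition anti_involution (mul : V -> V -> V) (sigma : V -> V) : Prop :=
  (forall (c : F) x y, sigma (c *: x + y) = c *: sigma x + sigma y) /\
  (forall x y, sigma (mul x y) = mul (sigma y) (sigma x)) /\
  (forall x, sigma (sigma x) = x).

Definition involutive_alg (mul : V -> V -> V) (one : V) (sigma : V -> V) : Prop :=
  anti_involution mul sigma /\
  (forall a, inF1 one (a + sigma a) /\ inF1 one (mul a (sigma a))).

Definition inIm (mul : V -> V -> V) (one u : V) : Prop :=
  u = 0 \/ (~ inF1 one u /\ inF1 one (mul u u)).

Definition lin_dep3 (x y z : V) : Prop :=
  exists c0 c1 c2 : F, [\/ c0 != 0, c1 != 0 | c2 != 0] /\
    c0 *: x + c1 *: y + c2 *: z = 0.

Definition vN_finite (mul : V -> V -> V) (one : V) : Prop :=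
  forall a b, mul a b = one -> mul b a = one.

Definition reversible (mul : V -> V -> V) : Prop :=
  forall a b, mul a b = 0 -> mul b a = 0.

End NonAssocAlg.

(* Main.v *)
Require Import Defs.
From mathcomp Require Import all_boot all_algebra.
From Stdlib Require Import Classical.
Import GRing.Theory.
Local Open Scope ring_scope.

Section Aux.
Variables (F : fieldType) (V : lmodType F) (mul : V -> V -> V) (one : V)
  (sigma : V -> V) (tr : V -> F).
Hypotheses (hbil : bilinear_mul mul) (hunit : unital mul one)
  (hinv : involutive_alg mul one sigma)
  (htr : forall a, a + sigma a = tr a *: one).

Lemma mul0l z : mul 0 z = 0.
Proof.
have := (hbil.1 1 0 0 z); rewrite !scale1r addr0 => h.
by apply: (addrI (mul 0 z)); rewrite addr0 -h.
Qed.
Lemma mul0r z : mul z 0 = 0.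
Proof.
have := (hbil.2 1 0 0 z); rewrite !scale1r addr0 => h.
by apply: (addrI (mul z 0)); rewrite addr0 -h.
Qed.
Lemma mulZl c x z : mul (c *: x) z = c *: mul x z.
Proof. by have := hbil.1 c x 0 z; rewrite !addr0 mul0l addr0. Qed.
Lemma mulZr c x z : mul z (c *: x) = c *: mul z x.
Proof. by have := hbil.2 c x 0 z; rewrite !addr0 mul0r addr0. Qed.
Lemma mulDl x y z : mul (x + y) z = mul x z + mul y z.
Proof. by have := hbil.1 1 x y z; rewrite !scale1r. Qed.
Lemma mulDr x y z : mul z (x + y) = mul z x + mul z y.
Proof. by have := hbil.2 1 x y z; rewrite !scale1r. Qed.
Lemma mulNl x z : mul (- x) z = - mul x z.
Proof. by rewrite -scaleN1r mulZl scaleN1r. Qed.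
Lemma mulNr x z : mul z (- x) = - mul z x.
Proof. by rewrite -scaleN1r mulZr scaleN1r. Qed.

Lemma one_neq0 : one != 0. Proof. exact: hunit.1. Qed.
Lemma mul1l x : mul one x = x. Proof. exact: (hunit.2 x).1. Qed.
Lemma mul1r x : mul x one = x. Proof. exact: (hunit.2 x).2. Qed.

Lemma scal_one_inj c d : c *: one = d *: one -> c = d.
Proof.
move=> /eqP; rewrite -subr_eq0 -scalerBl scaler_eq0 (negbTE one_neq0) orbF.
by rewrite subr_eq0 => /eqP.
Qed.

Lemma sigmaE a : sigma a = tr a *: one - a.
Proof. by rewrite -htr addrC addKr. Qed.

Lemma sigma_mul x y : sigma (mul x y) = mul (sigma y) (sigma x).
Proof. exact: hinv.1.2.1. Qed.

Lemma sigma_one : sigma one = one.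
Proof.
have h1 : forall x, mul (sigma one) x = x.
  move=> x; have := sigma_mul (sigma x) one.
  by rewrite mul1r !hinv.1.2.2.
by rewrite -[RHS]h1 mul1r.
Qed.

Lemma part1 a b : sigma (mul a b) - mul b a
               = (tr a * tr b) *: one - tr a *: b - tr b *: a.
Proof.
rewrite sigma_mul !sigmaE !mulDl !mulDr !mulNl !mulNr !mulZl !mulZr
  !mul1l !mul1r scalerA.
by rewrite opprK addrA addrK [tr b * _]mulrC addrAC.
Qed.

Lemma sigma0 : sigma 0 = 0.
Proof.
have := hinv.1.1 1 0 0; rewrite !scale1r addr0 => h.
by apply: (addrI (sigma 0)); rewrite addr0 -h.
Qed.

Lemma tr0 : tr 0 = 0.
Proof. by apply: scal_one_inj; rewrite -htr sigma0 addr0 scale0r. Qed.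

Lemma inIm_tr a : inIm mul one a -> tr a = 0.
Proof.
case=> [->|[nF [k hk]]]; first exact: tr0.
have [kk hkk] := (hinv.2 a).2.
move: hkk; rewrite sigmaE mulDr mulNr mulZr mul1r hk.
move=> /eqP; rewrite subr_eq => /eqP h.
apply/eqP; apply/negP => ht; apply: nF.
exists ((tr a)^-1 * (kk + k)).
by rewrite -scalerA scalerDl -h scalerA mulVf ?scale1r //; apply/negP.
Qed.

Lemma tr0_inIm a : tr a = 0 -> inIm mul one a \/ inF1 one a.
Proof.
move=> ht; case: (classic (inF1 one a)) => [h|h]; [by right|left; right].
split=> //.
have [kk hkk] := (hinv.2 a).2.
exists (- kk); move: hkk; rewrite sigmaE ht scale0r sub0r mulNr => h2.
by rewrite -[mul a a]opprK h2 scaleNr.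
Qed.

Lemma inF1_dep_a a b : inF1 one a -> lin_dep3 one a b.
Proof.
case=> k hk; exists k, (-1), 0; split; first by constructor 2; rewrite oppr_eq0 oner_eq0.
by rewrite scale0r addr0 scaleN1r hk subrr.
Qed.
Lemma inF1_dep_b a b : inF1 one b -> lin_dep3 one a b.
Proof.
case=> k hk; exists k, 0, (-1); split; first by constructor 3; rewrite oppr_eq0 oner_eq0.
by rewrite scale0r addr0 scaleN1r hk subrr.
Qed.

Lemma dep_comm a b : lin_dep3 one a b -> mul a b = mul b a.
Proof.
case=> c0 [c1 [c2 [hne heq]]].
have [h2|h2] := eqVneq c2 0.
  move: heq; rewrite h2 scale0r addr0 => heq.
  have [h1|h1] := eqVneq c1 0.
    move: heq; rewrite h1 scale0r addr0 => /eqP.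
    rewrite scaler_eq0 (negbTE one_neq0) orbF => /eqP h0.
    by move: hne; rewrite h0 h1 h2 eqxx; case.
  move/eqP: heq; rewrite addrC addr_eq0 => /eqP e.
  apply: (scalerI h1).
  by rewrite -mulZl -mulZr e mulNl mulNr mulZl mulZr mul1l mul1r.
move/eqP: heq; rewrite addrC addr_eq0 => /eqP e.
apply: (scalerI h2).
by rewrite -mulZr -mulZl e mulNl mulNr mulDl mulDr !mulZl !mulZr mul1l mul1r.
Qed.

Lemma sigmaZ c x : sigma (c *: x) = c *: sigma x.
Proof. by have := hinv.1.1 c x 0; rewrite !addr0 sigma0 addr0. Qed.

Lemma zero_case a b :
  0 = (tr a * tr b) *: one - tr a *: b - tr b *: a ->
  (inIm mul one a /\ inIm mul one b) \/ lin_dep3 one a b.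
Proof.
move=> h.
have [ha|ha] := eqVneq (tr a) 0; have [hb|hb] := eqVneq (tr b) 0.
- have [ia|fa] := tr0_inIm _ ha; last by right; exact: inF1_dep_a.
  have [ib|fb] := tr0_inIm _ hb; last by right; exact: inF1_dep_b.
  by left.
- right; exists (tr a * tr b), (- tr b), (- tr a); split; first by constructor 2; rewrite oppr_eq0.
  by rewrite !scaleNr addrAC h.
- right; exists (tr a * tr b), (- tr b), (- tr a); split; first by constructor 3; rewrite oppr_eq0.
  by rewrite !scaleNr addrAC h.
- right; exists (tr a * tr b), (- tr b), (- tr a); split; first by constructor 2; rewrite oppr_eq0.
  by rewrite !scaleNr addrAC h.
Qed.

Lemma main :
  (forall a b, sigma (mul a b) - mul b a
               = (tr a * tr b) *: one - tr a *: b - tr b *: a) /\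
  (vN_finite mul one <->
     (forall a b, (exists c : F, c != 0 /\ mul a b = c *: one) ->
        (inIm mul one a /\ inIm mul one b) \/ lin_dep3 one a b)) /\
  (reversible mul <->
     (forall a b, mul a b = 0 ->
        (inIm mul one a /\ inIm mul one b) \/ lin_dep3 one a b)).
Proof.
split; first exact: part1.
split; split.
- move=> vn a b [c [hc hab]].
  have hba : mul b a = c *: one.
    have : mul a (c^-1 *: b) = one by rewrite mulZr hab scalerA mulVf // scale1r.
    move/vn; rewrite mulZl => h.
    by rewrite -h scalerA divff // scale1r.
  apply: zero_case.
  by rewrite -part1 hab hba sigmaZ sigma_one subrr.
- move=> H a b hab.
  have [[ia ib]|d] := H a b (ex_intro _ 1 (conj (oner_neq0 _) (etrans hab (esym (scale1r one))))).
    move: (part1 a b); rewrite hab sigma_one (inIm_tr _ ia) (inIm_tr _ ib) !scale0r !subr0.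
  by rewrite GRing.mul0r scale0r => /eqP; rewrite subr_eq0 => /eqP <-.
  by rewrite -(dep_comm _ _ d).
- move=> rev a b hab.
  apply: zero_case.
  by rewrite -part1 hab (rev _ _ hab) sigma0 subrr.
- move=> H a b hab.
  have [[ia ib]|d] := H a b hab.
    move: (part1 a b); rewrite hab sigma0 (inIm_tr _ ia) (inIm_tr _ ib) !scale0r !subr0 sub0r.
  by rewrite GRing.mul0r scale0r => /eqP; rewrite oppr_eq0 => /eqP.
  by rewrite -(dep_comm _ _ d).
Qed.

End Aux.

Theorem lemma4p6 (F : fieldType) (V : lmodType F)
  (mul : V -> V -> V) (one : V) (sigma : V -> V) (tr : V -> F)
  (hchar : (2%:R : F) != 0)
  (hbil : bilinear_mul mul) (hunit : unital mul one)
  (hinv : involutive_alg mul one sigma)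
  (htr : forall a, a + sigma a = tr a *: one) :
  (forall a b, sigma (mul a b) - mul b a
               = (tr a * tr b) *: one - tr a *: b - tr b *: a) /\
  (vN_finite mul one <->
     (forall a b, (exists c : F, c != 0 /\ mul a b = c *: one) ->
        (inIm mul one a /\ inIm mul one b) \/ lin_dep3 one a b)) /\
  (reversible mul <->
     (forall a b, mul a b = 0 ->
        (inIm mul one a /\ inIm mul one b) \/ lin_dep3 one a b)).
Proof. exact: main. Qed.
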